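(* For every positive integer $T$ there exist a state (a graph $G=(V,E)$ with positive vertex populations), a number of districts $k$, positive weights $\Theta=(\theta(i,j))_{i,j\in V}$, and a probability distribution $\mathcal{D}$ over valid redistricting maps such that, letting $f(A)=\mathbb{E}_{A'\sim\mathcal{D}}[d_\Theta(A,A')]$ be the medoid cost, $A^*$ a population medoid (a minimizer of $f$ over valid maps), and $A_1,\dots,A_T$ i.i.d. samples from $\mathcal{D}$: (1) $\Pr\big[\min_{A\in\{A_1,\dots,A_T\}} d_\Theta(A,A^* )\ge 0.331\big]\ge\frac{2}{3}$, and (2) $\Pr\big[\min_{A\in\{A_1,\dots,A_T\}} f(A)\ge 1.1\, f(A^* )\big]\ge\frac{2}{3}$.
   Context: A redistricting map is a partition of $V$ into $k$ nonempty pairwise disjoint districts; a map is valid if its districts are contiguous in $G$, have approximately equal total population, and satisfy any other fixed validity constraints. Maps are identified with adjacency matrices $A$, $A(i,j)=1$ iff $i,j$ lie in the same district and $0$ otherwise. $d_\Theta(A_1,A_2)=\frac{1}{2}\sum_{i,j\in V}\theta(i,j)|A_1(i,j)-A_2(i,j)|$, summing over ordered pairs. *)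

(* Defs.v *)
From mathcomp Require Import all_boot all_order all_algebra.
From mathcomp Require Import reals.
Set Implicit Arguments. Unset Strict Implicit. Unset Printing Implicit Defensive.
Import Order.TTheory GRing.Theory Num.Theory.
Local Open Scope ring_scope.

(* A redistricting map on vertex set V is a partition of V (a set of
   pairwise disjoint nonempty blocks covering V), represented as
   {set {set V}}; blocks are the districts. *)

Section Redistricting.
Variables (R : realType) (V : finType).

Definition simple_graph (G : rel V) : Prop :=
  (forall x y, G x y = G y x) /\ (forall x, ~~ G x x).

Definition contiguous (G : rel V) (B : {set V}) : Prop :=
  forall x y, x \in B -> y \in B ->
    connect [rel a b | [&& G a b, a \in B & b \in B]] x y.

Definition district_pop (pop : V -> R) (B : {set V}) : R :=
  \sum_(v in B) pop v.

Definition total_pop (pop : V -> R) : R := \sum_(v : V) pop v.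

Definition valid_map (G : rel V) (pop : V -> R) (k : nat) (eps : R)
  (P : {set {set V}}) : Prop :=
  [/\ partition P [set: V], #|P| = k,
      (forall B, B \in P -> contiguous G B) &
      (forall B, B \in P ->
         `|district_pop pop B - total_pop pop / k%:R|
           <= eps * (total_pop pop / k%:R))].

(* adjacency matrix: A(i,j) = 1 iff i and j lie in the same district *)
Definition adj (P : {set {set V}}) (i j : V) : bool := i \in pblock P j.

Definition dTheta (theta : V -> V -> R) (P1 P2 : {set {set V}}) : R :=
  2^-1 * \sum_(i : V) \sum_(j : V)
     theta i j * `|(adj P1 i j)%:R - (adj P2 i j)%:R|.

Definition distribution_on (valid : {set {set V}} -> Prop)
  (D : {set {set V}} -> R) : Prop :=
  [/\ forall P, 0 <= D P,
      \sum_(P : {set {set V}}) D P = 1 &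
      forall P, 0 < D P -> valid P].

Definition medoid_cost (theta : V -> V -> R) (D : {set {set V}} -> R)
  (A : {set {set V}}) : R :=
  \sum_(P : {set {set V}}) D P * dTheta theta A P.

Definition iid_prob (T : nat) (D : {set {set V}} -> R)
  (E : {ffun 'I_T -> {set {set V}}} -> bool) : R :=
  \sum_(s : {ffun 'I_T -> {set {set V}}})
     (\prod_(t < T) D (s t)) * (E s)%:R.

End Redistricting.

(* Main.v *)
Require Import Defs.
From mathcomp Require Import all_boot all_order all_algebra.
From mathcomp Require Import reals lra.
Import Order.TTheory GRing.Theory Num.Theory.
Local Open Scope ring_scope.
Set Implicit Arguments. Unset Strict Implicit. Unset Printing Implicit Defensive.

Section Gen.
Variables (V : finType) (f : V -> bool) (a b : V) (fa : f a) (fb : ~~ f b).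

Definition P2 : {set {set V}} := [set [set x | f x]; [set x | ~~ f x]].

Lemma P2_triv : trivIset P2.
Proof.
apply/trivIsetP => A B /set2P[]-> /set2P[]->; rewrite ?eqxx // => _;
 rewrite -setI_eq0; apply/eqP/setP => x; rewrite !inE; by case: (f x).
Qed.

Lemma P2_part : partition P2 [set: V].
Proof.
apply/and3P; split; last first.
- apply/negP => /set2P[] /setP.
  + by move/(_ a); rewrite !inE fa.
  + by move/(_ b); rewrite !inE fb.
- exact: P2_triv.
apply/eqP/setP => x; rewrite inE; apply/bigcupP.
case hx: (f x).
- by exists [set x | f x]; [apply: set21 | rewrite inE hx].
- by exists [set x | ~~ f x]; [apply: set22 | rewrite inE hx].
Qed.

Lemma P2_card : #|P2| = 2%N.
Proof.
rewrite cards2; have -> : ([set x | f x] != [set x | ~~ f x]) by apply/eqP => /setP/(_ a); rewrite !inE fa.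
by [].
Qed.

Lemma P2_adj i j : adj P2 i j = (f i == f j).
Proof.
rewrite /adj.
case hj: (f j).
- rewrite (@def_pblock _ _ [set x | f x]) ?inE ?hj ?P2_triv ?set21 //.
  by rewrite eqxx ?orbT.
- rewrite (@def_pblock _ _ [set x | ~~ f x]) ?inE ?hj ?P2_triv ?set22 //.
  by rewrite eqxx ?orbT.
Qed.
End Gen.
Section Met.
Variables (R : realType) (V : finType) (theta : V -> V -> R).

Lemma dTheta_sym P Q : dTheta theta P Q = dTheta theta Q P.
Proof.
rewrite /dTheta; congr (_ * _); apply: eq_bigr => i _; apply: eq_bigr => j _.
by rewrite distrC.
Qed.

Lemma dTheta_tri P A Q : (forall i j, 0 <= theta i j) ->
  dTheta theta P Q <= dTheta theta P A + dTheta theta A Q.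
Proof.
move=> h; rewrite /dTheta -mulrDr ler_wpM2l // ?invr_ge0 ?ler0n //.
rewrite -big_split ler_sum // => i _; rewrite -big_split ler_sum // => j _.
rewrite /= -mulrDr ler_wpM2l //.
by rewrite (le_trans _ (ler_normD _ _)) // addrA subrK.
Qed.

Lemma dTheta_refl P : dTheta theta P P = 0.
Proof.
rewrite /dTheta big1 ?mulr0 // => i _; rewrite big1 // => j _.
by rewrite subrr normr0 mulr0.
Qed.

Lemma iid_all (T : nat) (D : {set {set V}} -> R) (c : pred {set {set V}}) :
  \sum_P D P = 1 -> (forall P, D P != 0 -> c P) ->
  @iid_prob R V T D (fun s => [forall t, c (s t)]) = 1.
Proof.
move=> h1 hc; rewrite /iid_prob.
rewrite (eq_bigr (fun s : {ffun 'I_T -> {set {set V}}} => \prod_(t < T) D (s t))).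
  rewrite -(bigA_distr_bigA (fun (t : 'I_T) P => D P)).
  by rewrite big1 // => t _.
move=> s _; case: (boolP [forall t, c (s t)]) => [_|]; first by rewrite mulr1.
move/forallPn => [t ht]; rewrite mulr0 (bigD1 t) //=.
have -> : D (s t) = 0 by apply/eqP; apply: contraNT ht => /hc.
by rewrite mul0r.
Qed.
End Met.
Definition tn (i j : 'I_4) : nat := if ((i == 0 :> nat) || (j == 0 :> nat)) then 10 else 1.
Definition l1 (i : 'I_4) : bool := (i <= 1)%N.
Definition l2 (i : 'I_4) : bool := (i == 0 :> nat) || (i == 2 :> nat).
Definition l3 (i : 'I_4) : bool := (i == 0 :> nat) || (i == 3 :> nat).
Definition lc (i : 'I_4) : bool := (i == 0 :> nat).
Definition dn (f g : 'I_4 -> bool) : nat :=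
  \sum_(i < 4) \sum_(j < 4) tn i j * ((f i == f j) != (g i == g j)).

Lemma dn12 : dn l1 l2 = 44%N. Proof. by rewrite /dn !big_ord_recr !big_ord0. Qed.
Lemma dn13 : dn l1 l3 = 44%N. Proof. by rewrite /dn !big_ord_recr !big_ord0. Qed.
Lemma dn23 : dn l2 l3 = 44%N. Proof. by rewrite /dn !big_ord_recr !big_ord0. Qed.
Lemma dnc1 : dn lc l1 = 24%N. Proof. by rewrite /dn !big_ord_recr !big_ord0. Qed.
Lemma dnc2 : dn lc l2 = 24%N. Proof. by rewrite /dn !big_ord_recr !big_ord0. Qed.
Lemma dnc3 : dn lc l3 = 24%N. Proof. by rewrite /dn !big_ord_recr !big_ord0. Qed.

Lemma absb (R : realType) (b1 b2 : bool) :
  `|(b1%:R : R) - b2%:R| = (b1 != b2)%:R.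
Proof. by case: b1; case: b2; rewrite /= ?subrr ?normr0 ?subr0 ?normr1 // sub0r normrN normr1. Qed.

Definition thetaR (R : realType) (i j : 'I_4) : R := (tn i j)%:R.

Lemma dTP2 (R : realType) f g :
  dTheta (@thetaR R) (P2 f) (P2 g) = 2^-1 * (dn f g)%:R.
Proof.
rewrite /dTheta /dn natr_sum; congr (_ * _); apply: eq_bigr => i _.
rewrite natr_sum; apply: eq_bigr => j _.
by rewrite !P2_adj absb natrM.
Qed.

Definition S1 := P2 l1.
Definition S2 := P2 l2.
Definition S3 := P2 l3.
Definition SC := P2 lc.
Definition supp : {set {set {set 'I_4}}} := S1 |: (S2 |: [set S3]).
Definition Dd (R : realType) (P : {set {set 'I_4}}) : R := if P \in supp then 3^-1 else 0.

Definition v0 : 'I_4 := @Ordinal 4 0 isT.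
Definition v1 : 'I_4 := @Ordinal 4 1 isT.
Definition v2 : 'I_4 := @Ordinal 4 2 isT.

Lemma S12 : S1 != S2.
Proof. by apply/eqP => /(congr1 (fun P => adj P v0 v1)); rewrite /S1 /S2 !P2_adj. Qed.
Lemma S13 : S1 != S3.
Proof. by apply/eqP => /(congr1 (fun P => adj P v0 v1)); rewrite /S1 /S3 !P2_adj. Qed.
Lemma S23 : S2 != S3.
Proof. by apply/eqP => /(congr1 (fun P => adj P v0 v2)); rewrite /S2 /S3 !P2_adj. Qed.

Lemma sum_supp (R : realType) (g : {set {set 'I_4}} -> R) :
  \sum_P Dd R P * g P = 3^-1 * (g S1 + g S2 + g S3).
Proof.
rewrite (bigID (mem supp)) /= [X in _ + X]big1 ?addr0; last first.
  by move=> P /negbTE hP; rewrite /Dd hP mul0r.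
rewrite (eq_bigr (fun P => 3^-1 * g P)); last by move=> P hP; rewrite /Dd hP.
rewrite -mulr_sumr /supp big_setU1 /=; last by rewrite !inE negb_or S12 S13.
rewrite big_setU1 /=; last by rewrite !inE S23.
by rewrite big_set1 addrA.
Qed.

Lemma cost (R : realType) A : medoid_cost (@thetaR R) (Dd R) A =
  3^-1 * (dTheta (@thetaR R) S1 A + dTheta (@thetaR R) S2 A + dTheta (@thetaR R) S3 A).
Proof. by rewrite /medoid_cost sum_supp !(dTheta_sym _ A). Qed.

Definition Gc : rel 'I_4 := fun x y => x != y.

Lemma valid_P2 (R : realType) (f : 'I_4 -> bool) a b : f a -> ~~ f b ->
  valid_map Gc (fun _ => (1 : R)) 2 1 (P2 f).
Proof.
move=> fa fb; split.
- exact: (P2_part fa fb).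
- exact: (P2_card fa).
- move=> B _ x y xB yB; case: (eqVneq x y) => [->|nxy]; first exact: connect0.
  by apply: connect1; rewrite /= /Gc nxy xB yB.
- move=> B _; rewrite /district_pop /total_pop !sumr_const card_ord.
  have : (#|B| <= 4)%N by rewrite (leq_trans (max_card _)) // card_ord.
  rewrite -(ler_nat R) => hB.
  have h0 : (0 : R) <= #|B|%:R by rewrite ler0n.
  rewrite mul1r ler_norml; apply/andP; split; lra.
Qed.

Theorem theorem3 (R : realType) (T : nat) (hT : (0 < T)%N) :
  exists (V : finType) (G : rel V) (pop : V -> R) (k : nat) (eps : R)
         (theta : V -> V -> R) (D : {set {set V}} -> R),
    [/\ simple_graph G /\ (forall v, 0 < pop v),
        0 <= eps,
        (forall i j, 0 < theta i j),
        distribution_on (valid_map G pop k eps) D &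
        forall Astar : {set {set V}},
          valid_map G pop k eps Astar ->
          (forall A, valid_map G pop k eps A ->
             medoid_cost theta D Astar <= medoid_cost theta D A) ->
          iid_prob D (fun s => [forall t : 'I_T,
              331%:R / 1000%:R <= dTheta theta (s t) Astar])
            >= 2%:R / 3%:R
          /\
          iid_prob D (fun s => [forall t : 'I_T,
              (11%:R / 10%:R) * medoid_cost theta D Astar
                <= medoid_cost theta D (s t)])
            >= 2%:R / 3%:R].
Proof.
have hv1 : valid_map Gc (fun _ => (1 : R)) 2 1 S1 by apply: (@valid_P2 R l1 v0 v2).
have hv2 : valid_map Gc (fun _ => (1 : R)) 2 1 S2 by apply: (@valid_P2 R l2 v0 v1).
have hv3 : valid_map Gc (fun _ => (1 : R)) 2 1 S3 by apply: (@valid_P2 R l3 v0 v1).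
have hvc : valid_map Gc (fun _ => (1 : R)) 2 1 SC by apply: (@valid_P2 R lc v0 v1).
have hsupp : forall P, Dd R P != 0 -> [\/ P = S1, P = S2 | P = S3].
  move=> P; rewrite /Dd /supp; case: ifP; last by rewrite eqxx.
  by rewrite !inE => /orP[/eqP->|/orP[/eqP->|/eqP->]] _; [constructor 1|constructor 2|constructor 3].
have d12 : dTheta (@thetaR R) S1 S2 = 22%:R by rewrite dTP2 dn12; lra.
have d13 : dTheta (@thetaR R) S1 S3 = 22%:R by rewrite dTP2 dn13; lra.
have d23 : dTheta (@thetaR R) S2 S3 = 22%:R by rewrite dTP2 dn23; lra.
have dc1 : dTheta (@thetaR R) S1 SC = 12%:R by rewrite dTheta_sym dTP2 dnc1; lra.
have dc2 : dTheta (@thetaR R) S2 SC = 12%:R by rewrite dTheta_sym dTP2 dnc2; lra.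
have dc3 : dTheta (@thetaR R) S3 SC = 12%:R by rewrite dTheta_sym dTP2 dnc3; lra.
have th0 : forall i j, 0 <= @thetaR R i j by move=> i j; rewrite ler0n.
exists 'I_4, Gc, (fun _ => 1), 2%N, 1, (@thetaR R), (Dd R).
split.
- split; last by move=> _; rewrite ltr01.
  by split => [x y|x]; rewrite /Gc ?eqxx // eq_sym.
- by rewrite ler01.
- by move=> i j; rewrite /thetaR ltr0n /tn; case: ifP.
- split.
  + by move=> P; rewrite /Dd; case: ifP; rewrite // invr_ge0 ler0n.
  + rewrite (eq_bigr (fun P => Dd R P * 1)); last by move=> P _; rewrite mulr1.
    rewrite sum_supp; lra.
  + move=> P /lt0r_neq0 /hsupp; by case=> ->.
move=> A hA hmin.
have fA : medoid_cost (@thetaR R) (Dd R) A <= 12%:R.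
  apply: (le_trans (hmin _ hvc)); rewrite cost dc1 dc2 dc3; lra.
rewrite cost in fA.
have t12 := dTheta_tri S1 A S2 th0.
have t13 := dTheta_tri S1 A S3 th0.
have t23 := dTheta_tri S2 A S3 th0.
rewrite d12 in t12; rewrite d13 in t13; rewrite d23 in t23.
rewrite !(dTheta_sym _ A) in t12 t13 t23.
have hsum : \sum_P Dd R P = 1.
  rewrite (eq_bigr (fun P => Dd R P * 1)); last by move=> P _; rewrite mulr1.
  rewrite sum_supp; lra.
split.
- rewrite (@iid_all _ _ T _ (fun P => 331%:R/1000%:R <= dTheta (@thetaR R) P A)) //; first lra.
  move=> P /hsupp [] ->; lra.
- rewrite (@iid_all _ _ T _ (fun P => 11%:R / 10%:R * medoid_cost (@thetaR R) (Dd R) A <= medoid_cost (@thetaR R) (Dd R) P)) //; first lra.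
  move=> P /hsupp [] ->; rewrite !cost ?dTheta_refl ?d12 ?d13 ?d23 ?(dTheta_sym _ S2 S1) ?(dTheta_sym _ S3 S1) ?(dTheta_sym _ S3 S2) ?d12 ?d13 ?d23 ?dTheta_refl; lra.
Qed.
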